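(* Let $m\ge 2$, $n\ge 1$, and let $\overrightarrow{K_{1,n}}$ be any orientation of the star $K_{1,n}$. Then the oriented star forest $m\overrightarrow{K_{1,n}}$, the disjoint union of $m$ copies of $\overrightarrow{K_{1,n}}$, is both $\{0\}$-antimagic and $\{0,1\}$-antimagic.
   Context: In an oriented graph $\overrightarrow{G}$, $d(u,v)$ is the length of a shortest directed path from $u$ to $v$ ($d(u,u)=0$, $d(u,v)=\infty$ if there is none). Let $\partial=\max\{d(u,v)<\infty : u,v\in V(\overrightarrow{G})\}$. A distance set is a nonempty $D\subseteq\{0,1,\dots,\partial\}$. The $D$-neighborhood of $u$ is $N_D(u)=\{v : d(u,v)\in D\}$. For a bijection $f:V(\overrightarrow{G})\to\{1,\dots,|V(\overrightarrow{G})|\}$, the $D$-weight of $u$ is $\omega_D(u)=\sum_{v\in N_D(u)} f(v)$. $\overrightarrow{G}$ is $D$-antimagic if $D\subseteq\{0,\dots,\partial\}$ and there is such a bijection $f$ with all $D$-weights pairwise distinct. *)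

(* Defs.v *)
From mathcomp Require Import all_boot.
Set Implicit Arguments. Unset Strict Implicit. Unset Printing Implicit Defensive.

Section OrientedGraph.
Variables (V : finType) (arc : rel V).

Definition step (A : {set V}) : {set V} := [set y | [exists x in A, arc x y]].

Fixpoint walkset (k : nat) (u : V) : {set V} :=
  if k is k'.+1 then step (walkset k' u) else [set u].

(* d(u,v) = k : a directed walk of length k exists and none shorter
   (the shortest walk length is the shortest path length) *)
Definition is_dist (u v : V) (k : nat) : bool :=
  (v \in walkset k u) && [forall j : 'I_k, v \notin walkset j u].

(* the directed diameter: max of finite distances (finite distances are < #|V|) *)
Definition ddiam : nat :=
  \max_(u : V) \max_(v : V) \max_(k < #|V|) (if is_dist u v k then nat_of_ord k else 0).

Definition NbD (D : seq nat) (u : V) : {set V} :=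
  [set v | has (is_dist u v) D].

Definition weightD (f : V -> nat) (D : seq nat) (u : V) : nat :=
  \sum_(v in NbD D u) f v.

Definition labeling (f : V -> nat) : Prop :=
  (forall v, 1 <= f v <= #|V|) /\ injective f /\
  (forall i, 1 <= i <= #|V| -> exists v, f v = i).

Definition D_antimagic (D : seq nat) : Prop :=
  D != [::] /\ all (fun k => k <= ddiam) D /\
  exists f, labeling f /\ injective (weightD f D).

End OrientedGraph.

(* Oriented star forest m K_{1,n}: copy c, vertex None = center, Some j = leaf j.
   Orientation o : o j = true means arc center -> leaf j, false means leaf j -> center. *)
Definition star_forest_arc (m n : nat) (o : 'I_n -> bool) : rel ('I_m * option 'I_n) :=
  fun x y => (x.1 == y.1) &&
    match x.2, y.2 with
    | None, Some j => o j
    | Some j, None => ~~ o j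
    | _, _ => false
    end.
Arguments star_forest_arc m n o : clear implicits.

(* Main.v *)
Require Import Defs.
From mathcomp Require Import all_boot.
From mathcomp Require Import zify.

Lemma dig_inj d x y i i' : i < d -> i' < d -> x * d + i = y * d + i' -> x = y /\ i = i'.
Proof.
move=> hi hi' e; have d0 : 0 < d by lia.
have : (x * d + i) %/ d = (y * d + i') %/ d by rewrite e.
rewrite !divnMDl // !divn_small // !addn0 => xy; subst; lia.
Qed.

Lemma inj_onto (T : finType) (f : T -> nat) :
  (forall v, 1 <= f v <= #|T|) -> injective f ->
  forall k, 1 <= k <= #|T| -> exists v, f v = k.
Proof.
move=> hr hi k /andP[k1 kT].
move: kT hr; case hN: #|T| => [|N] kT hr; first by lia.
have {}hr v : 1 <= f v /\ f v <= N.+1 by apply/andP.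
pose g (v : T) : 'I_N.+1 := inord (f v).-1.
have gi : injective g.
  move=> u v /(congr1 val).
  rewrite /= !inordK; try by case: (hr u) => *; case: (hr v) => *; lia.
  by move=> e; apply: hi; case: (hr u) => *; case: (hr v) => *; lia.
have cT : #|'I_N.+1| <= #|T| by rewrite card_ord hN.
have := inj_card_onto gi cT (inord k.-1).
case/codomP => v /(congr1 val).
rewrite /= !inordK; try by case: (hr v) => *; lia.
by move=> e; exists v; case: (hr v) => *; lia.
Qed.

Lemma Cinj c x y : x + c * x = y + c * y -> x = y.
Proof. by move/eqP; rewrite -!mulSn eqn_pmul2l // => /eqP. Qed.

Section Star.
Variables (m n : nat) (o : 'I_n -> bool).

Local Notation V := ('I_m * option 'I_n)%type.
Local Notation arc := (star_forest_arc m n o).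

Lemma arc_irr (u : V) : arc u u = false.
Proof. by case: u => i [j|] //=; rewrite /star_forest_arc /= eqxx. Qed.

Lemma is_dist0 (u v : V) : is_dist arc u v 0 = (v == u).
Proof.
rewrite /is_dist /= inE; case: (v == u) => //=.
by apply/forallP => -[].
Qed.

Lemma is_dist1 (u v : V) : is_dist arc u v 1 = arc u v.
Proof.
rewrite /is_dist /= /step inE.
have -> : [exists x in [set u], arc x v] = arc u v.
  apply/existsP/idP => [[x /andP[]]|h]; first by rewrite inE => /eqP ->.
  by exists u; rewrite inE eqxx.
case h: (arc u v) => //=.
apply/forallP => -[[|//] ?] /=; rewrite inE.
by apply/eqP => e; rewrite e arc_irr in h.
Qed.

Lemma weight0 f (u : V) : weightD arc f [:: 0] u = f u.
Proof.
rewrite /weightD (big_pred1 u) // => v.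
by rewrite /NbD inE /= is_dist0 orbF.
Qed.

Lemma weight01 f (u : V) :
  weightD arc f [:: 0; 1] u = f u + \sum_(v | arc u v) f v.
Proof.
rewrite /weightD (bigD1 u) /=; last by rewrite /NbD inE /= is_dist0 eqxx.
congr (_ + _); apply: eq_bigl => v.
rewrite /NbD inE /= is_dist0 is_dist1 orbF.
by case: (eqVneq v u) => [->|_]; rewrite ?arc_irr ?andbT ?andbF.
Qed.


Lemma sum_leaf f (i : 'I_m) (j : 'I_n) :
  \sum_(v | arc (i, Some j) v) f v = if o j then 0 else f (i, None).
Proof.
case hj: (o j).
  rewrite big_pred0 // => -[i' [k|]]; rewrite /star_forest_arc /= ?hj ?andbF //.
rewrite (big_pred1 (i, None)) // => -[i' [k|]];
  rewrite /star_forest_arc /= ?hj ?andbF ?andbT //.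
  all: by rewrite xpair_eqE /= ?andbF ?andbT // eq_sym.
Qed.

Lemma sum_center f (i : 'I_m) :
  \sum_(v | arc (i, None) v) f v = \sum_(j | o j) f (i, Some j).
Proof.
rewrite (reindex_omap (fun j : 'I_n => (i, Some j))
   (fun v : V => if v.1 == i then v.2 else None)).
  apply: eq_bigl => j; rewrite /star_forest_arc /= !eqxx /=.
  by rewrite andbT.
move=> [i' [k|]]; rewrite /star_forest_arc /= ?andbF // => /andP[/eqP <- _].
by rewrite eqxx.
Qed.


Definition Aset := [set j : 'I_n | o j].
Definition na := #|Aset|.
Definition nb := #|~: Aset|.
Definition rk (j : 'I_n) := #|[set k : 'I_n | (o k == o j) && (k < j)]|.

Lemma na_nb : na + nb = n.
Proof. by rewrite /na /nb cardsC card_ord. Qed.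

Lemma rk_lt j : rk j < #|[set k : 'I_n | o k == o j]|.
Proof.
apply: proper_card; apply/properP; split.
  by apply/subsetP => k; rewrite !inE => /andP[].
by exists j; rewrite !inE ?eqxx ?ltnn ?andbF.
Qed.

Lemma rk_ltA j : o j -> rk j < na.
Proof.
move=> oj; have := rk_lt j; congr (_ < _); apply: eq_card => k.
by rewrite !inE oj eqb_id.
Qed.

Lemma rk_ltB j : o j = false -> rk j < nb.
Proof.
move=> oj; have := rk_lt j; congr (_ < _); apply: eq_card => k.
by rewrite !inE oj; case: (o k).
Qed.

Lemma lt_rk j j' : o j = o j' -> j < j' -> rk j < rk j'.
Proof.
move=> e lt; apply: proper_card; apply/properP; split.
  apply/subsetP => k; rewrite !inE -e => /andP[-> /= kj].
  exact: ltn_trans kj lt.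
by exists j; rewrite !inE ?eqxx ?ltnn ?andbF // e eqxx.
Qed.

Lemma rk_inj j j' : o j = o j' -> rk j = rk j' -> j = j'.
Proof.
move=> e er; case: (ltngtP j j') => h.
- by have := lt_rk _ _ e h; rewrite er ltnn.
- by have := lt_rk _ _ (esym e) h; rewrite er ltnn.
- exact: val_inj.
Qed.


Definition lab (bA bB bC : nat) (v : V) : nat :=
  match v.2 with
  | None => bC + v.1
  | Some j => if o j then bA + m * rk j + v.1 else bB + v.1 * nb + rk j
  end.

Lemma bndA j (i : 'I_m) : o j -> m * rk j + i < m * na.
Proof. by move=> oj; have := rk_ltA j oj; have := ltn_ord i; nia. Qed.

Lemma bndB j (i : 'I_m) : o j = false -> i * nb + rk j < m * nb.
Proof. by move=> oj; have := rk_ltB j oj; have := ltn_ord i; nia. Qed.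

Lemma cardV : #|{: V}| = m * n.+1.
Proof. by rewrite card_prod card_option !card_ord. Qed.

Lemma lab_ok bA bB bC :
  0 < bA -> 0 < bB -> 0 < bC ->
  bA + m * na <= (m * n.+1).+1 -> bB + m * nb <= (m * n.+1).+1 ->
  bC + m <= (m * n.+1).+1 ->
  (bA + m * na <= bB \/ bB + m * nb <= bA) ->
  (bA + m * na <= bC \/ bC + m <= bA) ->
  (bB + m * nb <= bC \/ bC + m <= bB) ->
  @labeling _ (lab bA bB bC).
Proof.
move=> hA hB hC hA' hB' hC' dAB dAC dBC.
have rng : forall v, 1 <= lab bA bB bC v <= #|{: V}|.
  rewrite cardV => -[i [j|]]; rewrite /lab /=; last by have := ltn_ord i; lia.
  case oj: (o j).
    by have := bndA j i oj; lia.
  by have := bndB j i oj; lia.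
have inj : injective (lab bA bB bC).
  move=> [i [j|]] [i' [j'|]]; rewrite /lab /=.
  - case oj: (o j); case oj': (o j') => e.
    + have e' : rk j * m + i = rk j' * m + i' by lia.
      have [r ii] := dig_inj _ _ _ _ _ (ltn_ord i) (ltn_ord i') e'.
      by rewrite (val_inj ii) (rk_inj j j' (etrans oj (esym oj')) r).
    + by have := bndA j i oj; have := bndB j' i' oj'; lia.
    + by have := bndB j i oj; have := bndA j' i' oj'; lia.
    + have e' : i * nb + rk j = i' * nb + rk j' by lia.
      have [ii r] := dig_inj _ _ _ _ _ (rk_ltB j oj) (rk_ltB j' oj') e'.
      by rewrite (val_inj ii) (rk_inj j j' (etrans oj (esym oj')) r).
  - case oj: (o j) => e.
      by have := bndA j i oj; have := ltn_ord i'; lia.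
    by have := bndB j i oj; have := ltn_ord i'; lia.
  - case oj': (o j') => e.
      by have := bndA j' i' oj'; have := ltn_ord i; lia.
    by have := bndB j' i' oj'; have := ltn_ord i; lia.
  - move=> e; have ii : i = i' by apply: ord_inj; lia.
    by rewrite ii.
by split; [|split]; [exact: rng|exact: inj|exact: inj_onto].
Qed.


Definition T bA := \sum_(j | o j) (bA + m * rk j).

Lemma sum_const_o c : \sum_(j | o j) c = na * c.
Proof.
rewrite (eq_bigl (fun j => j \in Aset)) ?sum_nat_const // => j.
by rewrite inE.
Qed.

Lemma T_ge bA : na * bA <= T bA.
Proof.
rewrite -sum_const_o /T; apply: leq_sum => j _; exact: leq_addr.
Qed.

Lemma T_small bA : na <= 1 -> T bA = na * bA.
Proof.
move=> h; rewrite -sum_const_o /T; apply: eq_bigr => j oj.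
have := rk_ltA j oj; move=> r; have -> : rk j = 0 by lia.
by rewrite muln0 addn0.
Qed.

Definition W bA bB bC (v : V) : nat :=
  match v.2 with
  | None => bC + v.1 + T bA + na * v.1
  | Some j => if o j then bA + m * rk j + v.1 else bB + v.1 * nb + rk j + (bC + v.1)
  end.

Lemma wlab bA bB bC v :
  weightD arc (lab bA bB bC) [:: 0; 1] v = W bA bB bC v.
Proof.
rewrite weight01; case: v => i [j|].
  rewrite sum_leaf /W /lab /=; case: (o j) => //; lia.
rewrite sum_center /W /lab /= (eq_bigr (fun j => (bA + m * rk j) + i)); last by move=> j ->.
rewrite big_split /= sum_const_o /T addnA. by [].
Qed.


Lemma B_inj bB bC (i i' : 'I_m) j j' : o j = false -> o j' = false ->
  bB + i * nb + rk j + (bC + i) = bB + i' * nb + rk j' + (bC + i') ->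
  (i, Some j) = (i', Some j') :> V.
Proof.
move=> oj oj' e.
have e' : i * nb.+1 + rk j = i' * nb.+1 + rk j' by rewrite !mulnS; lia.
have [ii r] := dig_inj _ _ _ _ _ (leq_trans (rk_ltB j oj) (leqnSn _))
   (leq_trans (rk_ltB j' oj') (leqnSn _)) e'.
by rewrite (ord_inj ii) (rk_inj j j' (etrans oj (esym oj')) r).
Qed.


Lemma AA_inj bA (i i' : 'I_m) j j' : o j -> o j' ->
  bA + m * rk j + i = bA + m * rk j' + i' -> (i, Some j) = (i', Some j') :> V.
Proof.
move=> oj oj' e.
have e' : rk j * m + i = rk j' * m + i' by lia.
have [r ii] := dig_inj _ _ _ _ _ (ltn_ord i) (ltn_ord i') e'.
by rewrite (ord_inj ii) (rk_inj j j' (etrans oj (esym oj')) r).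
Qed.

Lemma design1 : na <= 1 -> injective (W 1 (m * na + m + 1) (m * na + 1)).
Proof.
move=> h1; have hT := T_small 1 h1.
have [h0|h0] : na = 0 \/ na = 1 by lia.
all: move: hT; rewrite h0 => hT.
all: move=> [i [j|]] [i' [j'|]]; rewrite /W /= ?hT ?h0.
all: (try case oj: (o j)); (try case oj': (o j')); move=> e.
all: try (by apply: AA_inj e).
all: try (by apply: B_inj e).
all: try (by have := bndA j i oj; rewrite ?h0; have := bndB j' i' oj'; rewrite ?h0; lia).
all: try (by have := bndB j i oj; rewrite ?h0; have := bndA j' i' oj'; rewrite ?h0; lia).
all: try (by have := bndA j i oj; rewrite ?h0; have := ltn_ord i'; lia).
all: try (by have := bndB j i oj; rewrite ?h0; have := ltn_ord i'; lia).
all: try (by have := bndA j' i' oj'; rewrite ?h0; have := ltn_ord i; lia).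
all: try (by have := bndB j' i' oj'; rewrite ?h0; have := ltn_ord i; lia).
all: try (by (have ii : i = i' by apply: ord_inj; lia); rewrite ii).
Qed.


Lemma design2 : 2 <= na ->
  injective (W (m * nb + 1) 1 (m * nb + m * na + 1)).
Proof.
move=> h2.
have hT : 2 * (m * nb + 1) <= T (m * nb + 1).
  apply: leq_trans (T_ge _); by rewrite leq_mul2r h2 orbT.
move=> [i [j|]] [i' [j'|]]; rewrite /W /=.
all: (try case oj: (o j)); (try case oj': (o j')); move=> e.
all: try (by apply: AA_inj e).
all: try (by apply: B_inj e).
all: try (by have := bndA j i oj; have := bndB j' i' oj'; lia).
all: try (by have := bndB j i oj; have := bndA j' i' oj'; lia).
all: try (by have := bndA j i oj; have := ltn_ord i'; lia).
all: try (by have := bndA j' i' oj'; have := ltn_ord i; lia).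
all: try (by have := bndB j i oj; have := ltn_ord i'; have := ltn_ord i;
   (have hm : m <= m * nb by rewrite leq_pmulr // (leq_ltn_trans (leq0n _) (rk_ltB j oj))); intros; exfalso; lia).
all: try (by have := bndB j' i' oj'; have := ltn_ord i; have := ltn_ord i';
   (have hm : m <= m * nb by rewrite leq_pmulr // (leq_ltn_trans (leq0n _) (rk_ltB j' oj'))); intros; exfalso; lia).
all: try (by (have ii : i = i' by apply: ord_inj; apply: (@Cinj na); lia); rewrite ii).
Qed.


Lemma ddiam_ge1 : 0 < m -> 0 < n -> 1 <= ddiam arc.
Proof.
move=> hm hn.
have hV : 1 < #|{: V}| by rewrite cardV; nia.
pose i0 : 'I_m := Ordinal hm. pose j0 : 'I_n := Ordinal hn.
have [u [v huv]] : exists u v : V, arc u v.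
  case oj: (o j0).
    by exists (i0, None), (i0, Some j0); rewrite /star_forest_arc /= ?eqxx oj.
  by exists (i0, Some j0), (i0, None); rewrite /star_forest_arc /= ?eqxx oj.
rewrite /ddiam.
apply: leq_trans (leq_bigmax u).
apply: leq_trans (leq_bigmax v).
apply: leq_trans (leq_bigmax (Ordinal hV)).
by rewrite /= is_dist1 huv.
Qed.

Lemma exists_good :
  exists f : V -> nat, labeling f /\ injective (weightD arc f [:: 0; 1]).
Proof.
have hab := na_nb.
have hmn : m * na + m * nb = m * n by rewrite -mulnDr na_nb.
have hS : m * n.+1 = m + m * n by rewrite mulnS.
case: (leqP na 1) => h.
- exists (lab 1 (m * na + m + 1) (m * na + 1)); split.
    by apply: lab_ok; lia.
  by move=> u v; rewrite !wlab; apply: design1.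
- exists (lab (m * nb + 1) 1 (m * nb + m * na + 1)); split.
    by apply: lab_ok; lia.
  by move=> u v; rewrite !wlab; apply: design2.
Qed.

End Star.

Theorem mainTheorem7 (m n : nat) (o : 'I_n -> bool) :
  2 <= m -> 1 <= n ->
  D_antimagic (star_forest_arc m n o) [:: 0] /\
  D_antimagic (star_forest_arc m n o) [:: 0; 1].
Proof.
move=> hm hn.
have [f [lf wf]] := exists_good m n o.
have hd := ddiam_ge1 m n o (ltnW hm) hn.
split; split => //; split; rewrite /= ?hd ?andbT //; exists f; split => //.
by move=> u v; rewrite !weight0; apply: (proj1 (proj2 lf)).
Qed.
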